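(* Let $N \geq \Delta \geq 2$ be integers. If $F$ is an acyclic graph with no isolated vertices, with $e(F)=N$, $\Delta(F)=\Delta$ and $e(L(F)) = g(N,\Delta)$, then $F$ is a tree.
   Context: All graphs are finite and simple; $L(F)$ is the line graph of $F$, $e(\cdot)$ the number of edges, $\Delta(\cdot)$ the maximum degree, $\delta(\cdot)$ the minimum degree. For integers $N \ge \Delta \ge 1$, $g(N,\Delta) = \max\{ e(L(F)) : F \text{ acyclic}, e(F)=N, \Delta(F)=\Delta, \delta(F)\geq 1\}$. *)

(* Defs.v *)
From mathcomp Require Import all_boot.
Set Implicit Arguments. Unset Strict Implicit. Unset Printing Implicit Defensive.

Section Graphs.
Variable V : finType.
Variable E : rel V.

Definition simple_graph : Prop := symmetric E /\ irreflexive E.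

Definition edges : {set {set V}} :=
  [set e : {set V} | [exists x, exists y, E x y && (e == [set x; y])]].

Definition num_edges : nat := #|edges|.

Definition deg (x : V) : nat := #|[set y | E x y]|.

Definition max_deg : nat := \max_(x : V) deg x.

Definition no_isolated : Prop := forall x : V, 0 < deg x.

Definition acyclic : Prop :=
  forall s : seq V, uniq s -> 3 <= size s -> ~~ cycle E s.

(* e(L(F)): edges of the line graph = unordered pairs of distinct edges of F
   sharing an endpoint *)
Definition line_edges : {set {set {set V}}} :=
  [set P : {set {set V}} | (P \subset edges) && (#|P| == 2) &&
     [exists e1 in P, exists e2 in P, (e1 != e2) && ~~ [disjoint e1 & e2]]].

Definition num_line_edges : nat := #|line_edges|.

Definition is_tree : Prop := acyclic /\ forall x y : V, connect E x y.

End Graphs.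

Definition admissible (N D : nat) (V : finType) (E : rel V) : Prop :=
  simple_graph E /\ acyclic E /\ num_edges E = N /\ max_deg E = D /\ no_isolated E.

(* "m = g(N, Delta)": m is the maximum of e(L(F)) over admissible F *)
Definition is_g (N D m : nat) : Prop :=
  (exists (V : finType) (E : rel V), admissible N D E /\ num_line_edges E = m) /\
  (forall (V : finType) (E : rel V), admissible N D E -> num_line_edges E <= m).

(* Main.v *)
Require Import Defs.
From mathcomp Require Import all_boot zify.
Set Implicit Arguments. Unset Strict Implicit. Unset Printing Implicit Defensive.

Section Generic.
Variable V : finType.
Variable E : rel V.
Hypothesis sE : simple_graph E.

Definition star v := [set e in edges E | v \in e].

Lemma edge_card e : e \in edges E -> #|e| = 2.
Proof.
case: sE => sym irr.
rewrite inE => /existsP[x /existsP[y /andP[Exy /eqP ->]]].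
rewrite cards2; case: eqP => // exy; by rewrite exy irr in Exy.
Qed.

Lemma card_star v : #|star v| = deg E v.
Proof.
case: sE => sym irr.
have -> : star v = (fun y => [set v; y]) @: [set y | E v y].
  apply/setP => e; rewrite !inE; apply/idP/imsetP.
  - case/andP=> /existsP[x /existsP[y /andP[Exy /eqP ->]]].
    move: Exy; rewrite !inE => Exy /orP[/eqP vx|/eqP vy].
      by exists y; rewrite ?inE ?vx.
    by exists x; [rewrite inE vy sym | rewrite vy setUC].
  - case=> y; rewrite inE => Evy ->; apply/andP; split.
      by apply/existsP; exists v; apply/existsP; exists y; rewrite Evy eqxx.
    by rewrite !inE eqxx.
rewrite card_in_imset // => y1 y2; rewrite !inE => E1 E2 eq12.
have : y1 \in [set v; y2] by rewrite -eq12 !inE eqxx orbT.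
rewrite !inE => /orP[/eqP e1|/eqP //].
by rewrite -e1 irr in E1.
Qed.

Lemma handshake : \sum_v deg E v = 2 * num_edges E.
Proof.
rewrite /num_edges.
transitivity (\sum_v \sum_(e in edges E) (v \in e)).
  apply: eq_bigr => v _; rewrite -card_star -sum1_card [LHS]big_mkcond /=.
  rewrite [in RHS]big_mkcond /=; apply: eq_bigr => e _.
  rewrite /star in_set; case: (e \in edges E) => /=; by case: (v \in e).
rewrite exchange_big /= mulnC -sum_nat_const; apply: eq_bigr => e eE.
rewrite -(edge_card eE) -sum1_card [in RHS]big_mkcond /=.
by apply: eq_bigr => v _; case: (v \in e).
Qed.

Definition Lv v := [set P : {set {set V}} | P \subset star v & #|P| == 2].

Lemma Lv_line v P : P \in Lv v -> P \in line_edges E.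
Proof.
rewrite !inE => /andP[sub c2]; rewrite c2 andbT.
have/cards2P[e1 [e2 [ne Pe]]] := c2; subst P.
apply/andP; split.
  apply/subsetP => e eP; have := subsetP sub e eP; rewrite inE; by case/andP.
apply/existsP; exists e1; rewrite !inE eqxx /=.
apply/existsP; exists e2; rewrite !inE eqxx orbT ne /=.
rewrite -setI_eq0; apply/set0Pn; exists v.
have := subsetP sub e1; have := subsetP sub e2; rewrite !inE !eqxx orbT /=.
by move=> /(_ isT) /andP[_ ->] /(_ isT) /andP[_ ->].
Qed.

Lemma line_Lv P : P \in line_edges E -> exists v, P \in Lv v.
Proof.
rewrite inE => /andP[/andP[sub c2] /existsP[e1 /andP[e1P /existsP[e2 /andP[e2P /andP[ne dj]]]]]].
move: dj; rewrite -setI_eq0 => /set0Pn[v]; rewrite inE => /andP[ve1 ve2].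
exists v; rewrite inE c2 andbT.
have eqP2 : [set e1; e2] == P.
  rewrite eqEcard (eqP c2) cards2 ne andbT.
  by apply/subsetP => e; rewrite !inE => /orP[/eqP->|/eqP->].
rewrite -(eqP eqP2); apply/subsetP => e; rewrite in_set2 => /orP[/eqP->|/eqP->];
  rewrite /star in_set ?ve1 ?ve2 andbT; exact: (subsetP sub).
Qed.

Lemma Lv_uniq v v' P : P \in Lv v -> P \in Lv v' -> v = v'.
Proof.
rewrite !inE => /andP[s1 c2] /andP[s2 _].
case/cards2P: c2 => e1 [e2 [ne eP]].
apply/eqP/negP => /negP nvv.
have key e : e \in P -> e = [set v; v'].
  move=> eP'; move/subsetP: s1 => /(_ e eP'); rewrite /star in_set => /andP[eE ve].
  move/subsetP: s2 => /(_ e eP'); rewrite in_set => /andP[_ ve'].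
  apply/esym/eqP; rewrite eqEcard (edge_card eE) cards2 nvv andbT.
  by apply/subsetP => x; rewrite !inE => /orP[/eqP->|/eqP->].
have k1 := key e1 ltac:(by rewrite eP !inE eqxx).
have k2 := key e2 ltac:(by rewrite eP !inE eqxx orbT).
by move: ne; rewrite k1 k2 eqxx.
Qed.

Lemma line_deg : num_line_edges E = \sum_v 'C(deg E v, 2).
Proof.
transitivity (\sum_v #|Lv v|); last first.
  apply: eq_bigr => v _; rewrite -card_star /Lv.
  by rewrite -cards_draws.
transitivity (\sum_v \sum_(P : {set {set V}}) (P \in Lv v)); last first.
  apply: eq_bigr => v _; rewrite -sum1_card [in RHS]big_mkcond /=.
  by apply: eq_bigr => P _; case: (P \in Lv v).
rewrite exchange_big /= /num_line_edges -sum1_card [in LHS]big_mkcond /=.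
apply: eq_bigr => P _.
case: ifP => PL.
  have [v Pv] := line_Lv PL.
  rewrite (bigD1 v) //= Pv big1 // => v' nv'.
  by case: (boolP (P \in Lv v')) => // /(Lv_uniq Pv) e; rewrite e eqxx in nv'.
rewrite big1 // => v _; case: (boolP (P \in Lv v)) => // /Lv_line; by rewrite PL.
Qed.

End Generic.

Lemma leaf_exists (V : finType) (E : rel V) :
  simple_graph E -> acyclic E -> no_isolated E ->
  forall a, exists z, connect E a z /\ deg E z = 1.
Proof.
move=> [sym irr] acy noi a.
suff: forall n p, #|V| - size p <= n -> uniq (a :: p) -> path E a p ->
  exists z, connect E a z /\ deg E z = 1.
  by move/(_ #|V| [::]); apply => //; rewrite subn0.
elim=> [|n IH] p hn up pp.
  have := max_card (mem (a :: p)); rewrite (card_uniqP up) /= => h.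
  rewrite leqn0 subn_eq0 in hn; by have := leq_trans h hn; rewrite ltnn.
set z := last a p.
have ext t : E z t -> t \notin a :: p -> exists z, connect E a z /\ deg E z = 1.
  move=> Ezt tn; apply: (IH (rcons p t)).
  - rewrite size_rcons; lia.
  - by rewrite -rcons_cons rcons_uniq tn.
  - by rewrite rcons_path pp.
have dz := noi z.
case: (ltnP 1 (deg E z)) => dz2; last first.
  exists z; split; last by apply/eqP; rewrite eqn_leq dz2 dz.
  by apply/connectP; exists p.
have pred t : t \in a :: p -> E z t -> index t (a :: p) = (size p).-1.
  move=> tin Ezt.
  have il : index t (a :: p) < (size p).+1 by rewrite -[(size p).+1]/(size (a::p)) index_mem.
  have ine : index t (a :: p) != size p.
    apply/eqP => ie; have := nth_index a tin; rewrite ie.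
    have -> : nth a (a :: p) (size p) = z.
      by rewrite -[size p]/((size (a::p)).-1) nth_last.
    by move=> zt; rewrite -zt irr in Ezt.
  case: (ltnP (index t (a :: p)) (size p).-1) => ii; last by lia.
  exfalso.
  set i := index t (a :: p).
  have acs := acy (drop i (a :: p)) (drop_uniq i up).
  move: acs; rewrite size_drop /= => /(_ ltac:(lia)) /negP; apply.
  have sd : drop i (a :: p) = t :: drop i.+1 (a :: p).
    by rewrite (drop_nth a) ?nth_index //= -/i; lia.
  have hs : sorted E (a :: p) by [].
  rewrite -(cat_take_drop i (a :: p)) in hs.
  have hz : last a p = last t (drop i.+1 (a :: p)).
    have := last_cat a (take i (a :: p)) (drop i (a :: p)).
    by rewrite cat_take_drop sd.
  have [_ h2] := cat_sorted2 hs.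
  rewrite sd /= rcons_path -hz; rewrite sd /= in h2; rewrite h2 /=.
  exact: Ezt.
case/card_gt1P: dz2 => t1 [t2 [h1 h2 ne]]; rewrite !inE in h1 h2.
case: (boolP (t1 \in a :: p)) => i1; last exact: ext i1.
case: (boolP (t2 \in a :: p)) => i2; last exact: ext i2.
have := pred _ i1 h1; rewrite -(pred _ i2 h2) => /(congr1 (nth a (a :: p))).
by rewrite !nth_index // => e; rewrite e eqxx in ne.
Qed.

Lemma card_sum (T : finType) (Q : pred T) : #|[set y | Q y]| = \sum_y Q y.
Proof.
rewrite -sum1_card big_mkcond /=; apply: eq_bigr => y _; rewrite inE; by case: (Q y).
Qed.

Section Construct.
Variables (V : finType) (E : rel V).
Hypothesis sym : symmetric E.
Hypothesis irr : irreflexive E.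
Hypothesis acy : acyclic E.
Hypothesis noi : no_isolated E.
Variables u u' w w' : V.
Hypothesis Nu : [set y | E u y] = [set u'].
Hypothesis Nw : [set y | E w y] = [set w'].
Hypothesis ncon : ~~ connect E u w.

Lemma Eu y : E u y = (y == u').
Proof. by rewrite -in_set1 -Nu inE. Qed.
Lemma Ew y : E w y = (y == w').
Proof. by rewrite -in_set1 -Nw inE. Qed.

Let cu x := connect E u x.
Lemma cu_edge x y : E x y -> cu x = cu y.
Proof.
move=> Exy; rewrite /cu; apply/idP/idP => h.
  by apply: connect_trans h (connect1 Exy).
by apply: connect_trans h (connect1 _); rewrite sym.
Qed.
Lemma cu_u : cu u. Proof. exact: connect0. Qed.
Lemma cu_u' : cu u'. Proof. by rewrite -(cu_edge (_ : E u u')) ?cu_u ?Eu. Qed.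
Lemma ncu_w : ~~ cu w. Proof. exact: ncon. Qed.
Lemma ncu_w' : ~~ cu w'. Proof. by rewrite -(cu_edge (_ : E w w')) ?ncu_w ?Ew. Qed.

Lemma neq_cu x y : cu x -> ~~ cu y -> x != y.
Proof. by move=> hx hy; apply/eqP => e; move: hx; rewrite e; apply/negP. Qed.

Lemma u_w : u != w. Proof. exact: neq_cu cu_u ncu_w. Qed.
Lemma u_w' : u != w'. Proof. exact: neq_cu cu_u ncu_w'. Qed.
Lemma u'_w : u' != w. Proof. exact: neq_cu cu_u' ncu_w. Qed.
Lemma u'_w' : u' != w'. Proof. exact: neq_cu cu_u' ncu_w'. Qed.
Lemma u_u' : u != u'.
Proof. by apply/eqP => e; have := Eu u'; rewrite -{1}e irr eqxx. Qed.

Local Notation V' := {x : V | x != u}.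
Definition E' : rel V' := fun x y =>
  E (val x) (val y) || (val x == u') && (val y == w) || (val x == w) && (val y == u').

Lemma sumV' (F : V -> nat) : \sum_(x : V') F (val x) = \sum_(y | y != u) F y.
Proof.
rewrite [RHS](reindex_omap (val : V' -> V) insub); last first.
  by move=> i ni; rewrite insubT.
by apply: eq_bigl => -[i iA] /=; rewrite insubT ?iA /= eqxx.
Qed.

Lemma cardV' (P : pred V) : #|[set y : V' | P (val y)]| = #|[set y | P y && (y != u)]|.
Proof.
rewrite !card_sum (sumV' (fun y => nat_of_bool (P y))) /=.
rewrite big_mkcond; apply: eq_bigr => y _; by case: (y != u); rewrite ?andbT ?andbF.
Qed.

Lemma deg' x : deg E' x = deg E (val x) + (val x == w).
Proof.
rewrite /deg.
set P := fun y => E (val x) y || (val x == u') && (y == w) || (val x == w) && (y == u').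
have -> : [set y | E' x y] = [set y : V' | P (val y)] by apply/setP => y; rewrite !inE.
rewrite cardV' /P; have xu := valP x; move: (val x) xu => {P} v vu.
case: (eqVneq v w) => [->|vw].
  rewrite (eq_sym w u') (negbTE u'_w) Nw cards1 /=.
  transitivity #|[set w'; u']|; last by rewrite cards2 eq_sym u'_w'.
  apply: eq_card => y; rewrite !inE Ew orbF; case: (eqVneq y w') => [->|_] /=.
    by rewrite eq_sym u_w'.
  by case: (eqVneq y u') => [->|//]; rewrite eq_sym u_u'.
rewrite addn0 /=.
case: (eqVneq v u') => [->|vu'].
  transitivity #|w |: ([set y | E u' y] :\ u)|.
    apply: eq_card => y; rewrite !inE /=; case: (eqVneq y w) => [->|//].
      by rewrite orbT /= eq_sym u_w.
    by move=> _; rewrite !orbF /= andbC.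
  rewrite (@cardsU1 V w) [in RHS](cardsD1 u [set y | E u' y]) !inE (sym u' u) Eu eqxx.
  have -> : E u' w = false.
    by apply/negP => /cu_edge e; move: ncu_w; rewrite -e cu_u'.
  by rewrite andbF.
apply: eq_card => y; rewrite !inE /= ?orbF.
case: (eqVneq y u) => [->|]; last by rewrite andbT.
by rewrite sym Eu (negbTE vu').
Qed.


Lemma sE : simple_graph E. Proof. by split. Qed.

Lemma degu : deg E u = 1. Proof. by rewrite /deg Nu cards1. Qed.
Lemma degw : deg E w = 1. Proof. by rewrite /deg Nw cards1. Qed.

Lemma sE' : simple_graph E'.
Proof.
split.
  move=> x y; rewrite /E' sym.
  case: (val x == u'); case: (val y == w); case: (val x == w); case: (val y == u');
    by rewrite /= ?orbT ?orbF.
move=> x; apply/negP; rewrite /E' irr /= => /orP[/andP[/eqP-> /eqP h]|/andP[/eqP-> /eqP h]].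
  by move: u'_w; rewrite h eqxx.
by move: u'_w; rewrite h eqxx.
Qed.

Lemma noiE' : no_isolated E'.
Proof. move=> x; rewrite deg'; exact: leq_trans (noi _) (leq_addr _ _). Qed.

Lemma sum_dw : \sum_(y | y != u) (y == w) = 1.
Proof.
rewrite (bigD1 w) ?(eq_sym w u) ?u_w //= eqxx big1 // => y /andP[_ /negbTE ->] //.
Qed.

Lemma edgesE' : num_edges E' = num_edges E.
Proof.
have h1 := handshake sE'; have h2 := handshake sE.
rewrite (eq_bigr _ (fun x _ => deg' x)) in h1.
rewrite (sumV' (fun y => deg E y + (y == w))) big_split /= sum_dw in h1.
rewrite (bigD1 u) //= degu in h2.
lia.
Qed.

Lemma lineE' : num_line_edges E' = (num_line_edges E).+1.
Proof.
rewrite (line_deg sE) (line_deg sE').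
rewrite (eq_bigr _ (fun x _ => congr1 (fun n => 'C(n, 2)) (deg' x))).
rewrite (sumV' (fun y => 'C(deg E y + (y == w), 2))).
rewrite (eq_bigr (fun y => 'C(deg E y, 2) + (y == w))); last first.
  by move=> y _; case: (eqVneq y w) => [->|_]; rewrite ?degw ?addn0.
rewrite big_split /= sum_dw [in RHS](bigD1 u) //= degu addn1 bin_small //.
Qed.

Lemma maxE' D : 2 <= D -> max_deg E = D -> max_deg E' = D.
Proof.
move=> D2 MD; apply/eqP; rewrite eqn_leq; apply/andP; split.
  apply/bigmax_leqP => x _; rewrite deg'.
  case: (eqVneq (val x) w) => [->|_]; first by rewrite degw.
  by rewrite addn0 -MD /max_deg (leq_bigmax (val x)).
have [v hv] : {v : V | max_deg E = deg E v}.
  by apply: eq_bigmax; apply/card_gt0P; exists u.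
have vu : v != u by apply/eqP => e; move: hv; rewrite e degu MD => e1; rewrite e1 in D2.
apply: leq_trans (@leq_bigmax _ (fun x => deg E' x) (Sub v vu : V')).
by rewrite deg' /= -hv MD leq_addr.
Qed.

Lemma acyE' : acyclic E'.
Proof.
move=> s us ss; apply/negP => cs.
case: (boolP (has (fun x : V' => val x == w) s)) => hw; last first.
  have al : all (fun x : V' => val x != w) s by rewrite all_predC.
  have : cycle (relpre val E) s.
    apply: (sub_in_cycle _ al cs) => x y; rewrite /= => /negbTE hx /negbTE hy.
    by rewrite /E' hx hy !andbF !orbF.
  rewrite -cycle_map => cm.
  have um : uniq (map val s) by rewrite (map_inj_uniq val_inj).
  by have := acy um; rewrite size_map cm => /(_ ss).
case/hasP: hw => x0 x0s /eqP vx0.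
case: (rot_to x0s) => i r hr.
move: us ss cs; rewrite -(rot_uniq i) -(rot_cycle i) -(size_rot i) hr.
case: r {hr} => [|h [|h2 r]] //= us ss.
rewrite rcons_path /= => /and4P[Ex0h Ehh2 ph0 El].
have ph : path E' h (h2 :: r) by rewrite /= Ehh2 ph0.
set l := last h2 r in El.
have lin : l \in h2 :: r by apply: mem_last.
move: us => /= /andP[x0notin /andP[hn _]].
have al : all (fun y : V' => val y != w) (h :: h2 :: r).
  apply/allP => y yin; apply/eqP => vy.
  have e : y = x0 by apply: val_inj; rewrite vy vx0.
  by rewrite e (negbTE x0notin) in yin.
have pE : path (relpre val E) h (h2 :: r).
  apply: (sub_in_path _ al ph) => x y; rewrite /= => /negbTE hx /negbTE hy.
  by rewrite /E' hx hy !andbF !orbF.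
have chl : connect E (val h) (val l).
  apply/connectP; exists (map val (h2 :: r)); first by rewrite path_map.
  by rewrite last_map.
have hv : (val h == w') || (val h == u').
  move: Ex0h; rewrite /E' vx0 Ew eqxx (eq_sym w u') (negbTE u'_w) /=.
  by rewrite orbF.
have lv : (val l == w') || (val l == u').
  move: El; rewrite /E' vx0 sym Ew eqxx (eq_sym w u') (negbTE u'_w) andbT andbF orbF.
  by [].
have hl : val h != val l.
  apply/eqP => /val_inj e; move: hn; rewrite e; by rewrite lin.
have cl : cu (val h) = cu (val l).
  rewrite /cu; apply/idP/idP => c.
    exact: connect_trans c chl.
  apply: connect_trans c _; by rewrite (sym_connect_sym sym).
have cw x : (x == w') || (x == u') -> cu x = (x == u').
  case/orP=> /eqP->; last by rewrite eqxx cu_u'.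
  by rewrite (negbTE ncu_w') eq_sym (negbTE u'_w').
rewrite (cw _ hv) (cw _ lv) in cl.
move: hl cl; case/orP: hv => /eqP->; case/orP: lv => /eqP->;
  by rewrite ?eqxx ?(eq_sym w' u') ?(negbTE u'_w').
Qed.

Lemma construct N D : 2 <= D -> num_edges E = N -> max_deg E = D ->
  admissible N D E' /\ num_line_edges E' = (num_line_edges E).+1.
Proof.
move=> D2 NE MD; split; last exact: lineE'.
split; first exact: sE'.
split; first exact: acyE'.
split; first by rewrite edgesE'.
split; first exact: maxE'.
exact: noiE'.
Qed.

End Construct.
Unset Implicit Arguments.
Theorem mainTheorem6 (N D : nat) (V : finType) (E : rel V) :
  2 <= D -> D <= N ->
  simple_graph E -> acyclic E -> no_isolated E ->
  num_edges E = N -> max_deg E = D ->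
  is_g N D (num_line_edges E) ->
  is_tree E.
Proof.
move=> D2 DN sE acy noi NE MD [_ gmax].
split=> //.
case: (boolP [forall x, [forall y, connect E x y]]) => [/forallP H x y | ].
  by move/forallP: (H x) => /(_ y).
rewrite negb_forall => /existsP[a]; rewrite negb_forall => /existsP[b nab].
exfalso.
have [u [au du]] := leaf_exists sE acy noi a.
have [w [bw dw]] := leaf_exists sE acy noi b.
case: sE => sym irr.
have csym := sym_connect_sym sym.
have ncon : ~~ connect E u w.
  apply/negP => uw; move/negP: nab; apply.
  apply: connect_trans au (connect_trans uw _); by rewrite csym.
have /cards1P[u' Nu] : #|[set y | E u y]| == 1 by rewrite -/(deg E u) du.
have /cards1P[w' Nw] : #|[set y | E w y]| == 1 by rewrite -/(deg E w) dw.
have [adm ln] := construct sym irr acy noi Nu Nw ncon D2 NE MD.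
by have := gmax _ _ adm; rewrite ln ltnn.
Qed.
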